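(* Let $P$ be a quasi-lattice ordered subsemigroup of a discrete group $Q$ and let $(X,P,T)$ be a directed locally compact semigroup action. Let $\Lambda=X*P$ be the topological $P$-graph of the action, with path space $\Omega$, boundary path space $\partial\Omega$ and shift $T$. Then there is a homeomorphism $J:X\to\partial\Omega$ which is $P$-equivariant (for all $(x,m)\in X*P$, $J(x)\cdot m\neq\emptyset$ and $J(x\cdot m)=J(x)\cdot m$) and which implements a groupoid isomorphism $(x,q,y)\mapsto(J(x),q,J(y))$ of $G(X,P,T)$ onto $G(\partial\Omega,P,T)$.
   Context: Partial action: $X*P\subset X\times P$, $(x,m)\mapsto x\cdot m$, $x\cdot e=x$, $(x,mn)\in X*P$ iff $(x,m),(x\cdot m,n)\in X*P$, then $(x\cdot m)\cdot n=x\cdot(mn)$; $U(m)=\{x:(x,m)\in X*P\}$, $m\le n$ iff $n=mp$. Directed: $U(m)\cap U(n)\neq\emptyset$ implies there is $r\ge m,n$ with $U(m)\cap U(n)=U(r)$. Locally compact: $X$ locally compact Hausdorff, $U(m),V(m)=\{x\cdot m\}$ open, $x\mapsto x\cdot m$ a local homeomorphism $U(m)\to V(m)$. Quasi-lattice ordered: $P\cap P^{-1}=\{e\}$ and two elements with a common upper bound have a least upper bound. The graph of the action is $\Lambda=X*P$ (topology from $X\times P$) with $\Lambda^{(0)}=X$, $r(x,n)=x$, $s(x,n)=x\cdot n$, $d(x,n)=n$, $(x,m)(x\cdot m,n)=(x,mn)$. For $\mu,\lambda\in\Lambda$, $\mu\le\lambda$ iff $\lambda=\mu\nu$. $\Omega$: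 nonempty closed hereditary (closed under $\le$-predecessors) directed (any two elements have a common upper bound inside) subsets of $\Lambda$, with the relative Fell topology; $A\cdot n=\{\nu:\exists\mu\in\Lambda^n,\mu\nu\in A\}$ where $\Lambda^n=d^{-1}(n)$. $E\subset\Lambda$ exhaustive: for each $\lambda$ with $r(\lambda)\in r(E)$ there is $\mu\in E$ such that $\lambda,\mu$ have a common upper bound; $\lambda\in A$ extendable in $A$: for every compact exhaustive $E$ with $r(E)$ a neighborhood of $s(\lambda)$ some $\mu\in E$ has $\lambda\mu\in A$; $\partial\Omega$: those $A\in\Omega$ all of whose elements are extendable in $A$. For a partial action $(Y,P,S)$ (here $Y=X$ or $Y=\partial\Omega$ with $A\mapsto A\cdot n$ defined when $A\cdot n\ne\emptyset$), $G(Y,P,S)=\{(x,q,y)\in Y\times Q\times Y:\exists m,n,\ q=mn^{-1},\ x\in U(m), y\in U(n), x\cdot m=y\cdot n\}$ with $(x,q,y)(y,q',z)=(x,qq',z)$, $(x,q,y)^{-1}=(y,q^{-1},x)$ and topology with basis $Z(U,m,n,V)=\{(x,mn^{-1},y):x\in U,y\in V,x\cdot m=y\cdot n\}$. *)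

(* Defs.v *)
From HB Require Import structures.
From mathcomp Require Import all_boot all_order all_algebra.
From mathcomp Require Import all_classical all_reals all_analysis.
Set Implicit Arguments. Unset Strict Implicit. Unset Printing Implicit Defensive.
Local Open Scope classical_set_scope.

Section GroupDefs.
Variables (Q : Type) (mul : Q -> Q -> Q) (inv : Q -> Q) (e : Q).

Definition is_group : Prop :=
  (forall a b c, mul a (mul b c) = mul (mul a b) c) /\
  (forall a, mul e a = a /\ mul a e = a) /\
  (forall a, mul (inv a) a = e /\ mul a (inv a) = e).

Variable P : set Q.

Definition is_submonoid : Prop :=
  P e /\ (forall m n, P m -> P n -> P (mul m n)).

Definition ple (m n : Q) : Prop := exists p, P p /\ n = mul m p.

Definition quasi_lattice_ordered : Prop :=
  (forall p, P p -> P (inv p) -> p = e) /\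
  (forall m n, P m -> P n -> (exists u, P u /\ ple m u /\ ple n u) ->
     exists l, P l /\ ple m l /\ ple n l /\
       forall u, P u -> ple m u -> ple n u -> ple l u).
End GroupDefs.

Section PartialAction.
Variables (Q : Type) (mul : Q -> Q -> Q) (e : Q) (P : set Q).
Variables (Y : Type) (dom : Y -> Q -> Prop) (act : Y -> Q -> Y).
(* dom x m  means  (x,m) \in X*P ;  act x m  is  x . m  *)

Definition is_partial_action : Prop :=
  (forall y m, dom y m -> P m) /\
  (forall y, dom y e /\ act y e = y) /\
  (forall y m n, P m -> P n ->
     (dom y (mul m n) <-> dom y m /\ dom (act y m) n)) /\
  (forall y m n, P m -> P n -> dom y m -> dom (act y m) n ->
     act (act y m) n = act y (mul m n)).

Definition Udom (m : Q) : set Y := [set y | dom y m].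
Definition Vim (m : Q) : set Y := (fun y => act y m) @` Udom m.

Definition directed_action : Prop :=
  forall m n, P m -> P n -> Udom m `&` Udom n !=set0 ->
    exists r, P r /\ ple mul P m r /\ ple mul P n r /\
      Udom m `&` Udom n = Udom r.
End PartialAction.

Section LocHomeo.
Variable X : topologicalType.
Definition local_homeo (U V : set X) (f : X -> X) : Prop :=
  f @` U = V /\
  forall x, U x -> exists W, open W /\ W x /\ W `<=` U /\
    {in W &, injective f} /\ {within W, continuous f} /\
    (forall W', open W' -> W' `<=` W -> open (f @` W')).
End LocHomeo.

Definition locally_compact_action (X : topologicalType) (Q : Type) (P : set Q)
  (dom : X -> Q -> Prop) (act : X -> Q -> X) : Prop :=
  hausdorff_space X /\ locally_compact [set: X] /\
  forall m, P m -> open (Udom dom m) /\ open (Vim dom act m) /\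
    local_homeo (Udom dom m) (Vim dom act m) (fun x => act x m).

Section Groupoid.
Variables (Q : Type) (mul : Q -> Q -> Q) (inv : Q -> Q) (P : set Q).
Variables (Y : Type) (Y0 : set Y) (dom : Y -> Q -> Prop) (act : Y -> Q -> Y).
(* openY : the open subsets of the unit space Y0 (relative topology) *)
Variable openY : set Y -> Prop.

Definition Gset : set (Y * Q * Y) :=
  [set g | let '(x, q, y) := g in Y0 x /\ Y0 y /\
     exists m n, P m /\ P n /\ q = mul m (inv n) /\ dom x m /\ dom y n /\
       act x m = act y n].

Definition Zbasic (U : set Y) (m n : Q) (V : set Y) : set (Y * Q * Y) :=
  [set g | let '(x, q, y) := g in U x /\ V y /\ q = mul m (inv n) /\
     dom x m /\ dom y n /\ act x m = act y n].

Definition Gopen (W : set (Y * Q * Y)) : Prop :=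
  W `<=` Gset /\
  forall g, W g -> exists U V m n, openY U /\ openY V /\ P m /\ P n /\
    Zbasic U m n V g /\ Zbasic U m n V `<=` W.

Definition gmul (g h : Y * Q * Y) : Y * Q * Y :=
  let '(x, q, _) := g in let '(_, q', z) := h in (x, mul q q', z).
Definition ginv (g : Y * Q * Y) : Y * Q * Y :=
  let '(x, q, y) := g in (y, inv q, x).
End Groupoid.

Section PGraph.
Variables (X : topologicalType) (Q : choiceType) (mul : Q -> Q -> Q) (P : set Q).
Variables (dom : X -> Q -> Prop) (act : X -> Q -> X).

Definition LT := (X * discrete_topology Q)%type.

Definition Lam : set LT := [set l | P l.2 /\ dom l.1 l.2].
Definition lrg (l : LT) : X := l.1.
Definition lsrc (l : LT) : X := act l.1 l.2.
Definition ldg (l : LT) : Q := l.2.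
(* (x,m)(x.m,n) = (x,mn) *)
Definition lcomp (l k : LT) : LT := (l.1, mul l.2 k.2).

Definition lle (mu lam : LT) : Prop :=
  Lam mu /\ Lam lam /\ exists nu, Lam nu /\ lsrc mu = lrg nu /\ lam = lcomp mu nu.

Definition Lam_closed (A : set LT) : Prop :=
  A `<=` Lam /\ exists C : set LT, closed C /\ A = C `&` Lam.
Definition hereditary (A : set LT) : Prop :=
  forall mu lam, A lam -> lle mu lam -> A mu.
Definition directed_set (A : set LT) : Prop :=
  forall l1 l2, A l1 -> A l2 -> exists l, A l /\ lle l1 l /\ lle l2 l.

Definition Omega : set (set LT) :=
  [set A | A !=set0 /\ Lam_closed A /\ hereditary A /\ directed_set A].

(* Fell topology on subsets of Lambda: subbasis *)
Definition fell_sub (S : set (set LT)) : Prop :=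
  (exists K : set LT, K `<=` Lam /\ compact K /\ S = [set A | A `&` K = set0]) \/
  (exists O : set LT, open O /\ S = [set A | A `&` (O `&` Lam) !=set0]).

Definition fell_open (W : set (set LT)) : Prop :=
  forall A, W A -> exists (n : nat) (f : nat -> set (set LT)),
    (forall i, (i < n)%N -> fell_sub (f i)) /\
    (forall i, (i < n)%N -> f i A) /\
    (forall B, (forall i, (i < n)%N -> f i B) -> W B).

Definition exhaustive (E : set LT) : Prop :=
  E `<=` Lam /\
  forall lam, Lam lam -> (lrg @` E) (lrg lam) ->
    exists mu, E mu /\ exists nu, lle lam nu /\ lle mu nu.

Definition extendable (lam : LT) (A : set LT) : Prop :=
  forall E : set LT, compact E -> exhaustive E -> nbhs (lsrc lam) (lrg @` E) ->
    exists mu, E mu /\ lsrc lam = lrg mu /\ A (lcomp lam mu).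

Definition Bdry : set (set LT) :=
  [set A | Omega A /\ forall lam, A lam -> extendable lam A].

Definition bdry_open (W : set (set LT)) : Prop :=
  W `<=` Bdry /\ exists O, fell_open O /\ W = O `&` Bdry.

Definition pshift (A : set LT) (n : Q) : set LT :=
  [set nu | Lam nu /\ exists mu, Lam mu /\ ldg mu = n /\ lsrc mu = lrg nu /\
     A (lcomp mu nu)].

Definition bdom (A : set LT) (n : Q) : Prop := Bdry A /\ P n /\ pshift A n !=set0.
End PGraph.

(* Main.v *)
Require Import Defs.
From HB Require Import structures.
From mathcomp Require Import all_boot all_order all_algebra.
From mathcomp Require Import all_classical all_reals all_analysis.
Local Open Scope classical_set_scope.
Set Implicit Arguments. Unset Strict Implicit.

Section Top.
Variables (X : topologicalType) (Q : choiceType).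
Lemma fst_cont : continuous (fun l : LT X Q => l.1).
Proof. move=> p. exact: cvg_fst. Qed.
Lemma pair_cont (m : Q) : continuous (fun y : X => ((y, m) : LT X Q)).
Proof. move=> y.
have := @cvg_pair X X (discrete_topology Q) (nbhs y) (nbhs y) (nbhs (m : discrete_topology Q)) _ _ _ id (fun=> m) cvg_id (cvg_cst _).
exact. Qed.
Lemma cpt_nbhs_in (hX : hausdorff_space X) (hl : locally_compact [set: X])
  (x : X) (U : set X) : open U -> U x ->
  exists K, compact K /\ nbhs x K /\ K `<=` U.
Proof.
move=> oU Ux.
have := hl x I. rewrite withinET. move=> [K0 K0x [cK0 _]].
have reg := compact_regular hX cK0 K0x.
have nU : nbhs x U by apply: open_nbhs_nbhs.
have [C Cx CU] := reg U nU.
exists (K0 `&` closure C); split; first by apply: compact_closedI => //; exact: closed_closure.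
split; first by apply: filterI => //; apply: filterS Cx; exact: subset_closure.
by move=> y [_ /CU].
Qed.
End Top.

Section Main.
Variables (Q : choiceType) (mul : Q -> Q -> Q) (inv : Q -> Q) (e : Q).
Hypothesis hQ : is_group mul inv e.
Variable P : set Q.
Hypothesis hP : is_submonoid mul e P.
Variables (X : topologicalType) (dom : X -> Q -> Prop) (act : X -> Q -> X).
Hypothesis hact : is_partial_action mul e P dom act.
Hypothesis hdir : directed_action mul P dom.
Hypothesis hlc : locally_compact_action P dom act.

Lemma mul1q a : mul e a = a. Proof. by case: hQ => _ [/(_ a) [] ]. Qed.
Lemma Pe : P e. Proof. by case: hP. Qed.
Lemma Pmul m n : P m -> P n -> P (mul m n). Proof. by case: hP => _; apply. Qed.
Lemma domP y m : dom y m -> P m. Proof. by case: hact => H _; apply: H. Qed.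
Lemma dom_e y : dom y e. Proof. by case: hact => _ [/(_ y) []]. Qed.
Lemma act_e y : act y e = y. Proof. by case: hact => _ [/(_ y) []]. Qed.
Lemma dom_mul y m n : P m -> P n -> (dom y (mul m n) <-> dom y m /\ dom (act y m) n).
Proof. by case: hact => _ [_ [H _]]; apply: H. Qed.

Definition J (x : X) : set (LT X Q) := [set l | Lam P dom l /\ l.1 = x].

Lemma J_e x : J x (x, e).
Proof. split => //; split; [exact: Pe | exact: dom_e]. Qed.

Lemma lle_fst mu lam : lle mul P dom act mu lam -> lam.1 = mu.1.
Proof. by case=> _ [_ [nu [_ [_ ->]]]]. Qed.

Lemma lle_up y m r p : dom y m -> dom y r -> P p -> r = mul m p ->
  lle mul P dom act (y, m) (y, r).
Proof.
move=> dm dr Pp er.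
have Pm := domP dm.
split; first by split => //.
split; first by split => //; exact: domP dr.
exists (act y m, p); split.
  split => //=. by move: dr; rewrite er => /(dom_mul y Pm Pp) [].
by split => //; rewrite /lcomp /= er.
Qed.

Lemma common_up y m n : dom y m -> dom y n -> exists r, dom y r /\
  lle mul P dom act (y, m) (y, r) /\ lle mul P dom act (y, n) (y, r).
Proof.
move=> dm dn.
have [r [Pr [[p [Pp Ep]] [[p' [Pp' Ep']] EU]]]] := hdir (domP dm) (domP dn) (ex_intro _ y (conj dm dn)).
have dr : Udom dom r y by rewrite -EU.
exists r; split => //; split; [exact: lle_up dm dr Pp Ep | exact: lle_up dn dr Pp' Ep'].
Qed.


Lemma hX : hausdorff_space X. Proof. by case: hlc. Qed.

Lemma J_bdry x : Bdry mul P dom act (J x).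
Proof.
split.
  split; first by exists (x, e); exact: J_e.
  split.
    split; first by move=> l [].
    exists ((fun l : LT X Q => l.1) @^-1` [set x]); split.
      move/continuous_closedP: (@fst_cont X Q) => H; apply: H.
      apply: accessible_closed_set1. exact: hausdorff_accessible hX.
    by apply/seteqP; split=> l; [case=> La <-; split | case=> /= <- La].
  split.
    by move=> mu lam [La Lx] H; split; [case: H | rewrite -(lle_fst H)].
  move=> [y1 m1] [y2 m2] [[_ d1] /= E1] [[_ d2] /= E2]; subst.
  have [r [dr [l1 l2]]] := common_up d1 d2.
  by exists (x, r); split => //; split => //; split => //; exact: domP dr.
move=> lam [[Pl dl] lx] E cE [EL exh] nE.
have yE := nbhs_singleton nE.
have Ly : Lam P dom ((lsrc act lam, e) : LT X Q) by split; [exact: Pe | exact: dom_e].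
have [mu [Emu [nu [l1 l2]]]] := exh _ Ly yE.
have mu1 : mu.1 = lsrc act lam by rewrite -(lle_fst l2) (lle_fst l1).
exists mu; split => //; split; first by rewrite /lrg mu1.
have [Pmu dmu] := EL _ Emu.
split => //=; split => /=; first exact: Pmul.
by apply/(dom_mul _ Pl Pmu); split => //; rewrite /lsrc in mu1; rewrite -mu1.
Qed.

Lemma J_inj : injective J.
Proof. move=> x y Exy. have := J_e x; rewrite Exy. by case. Qed.


Lemma hLC : locally_compact [set: X]. Proof. by case: hlc => _ []. Qed.
Lemma Uopen m : P m -> open (Udom dom m). Proof. by case: hlc => _ [_ /(_ m) H] /H []. Qed.

Lemma J_surj A : Bdry mul P dom act A -> exists x, J x = A.
Proof.
case=> [[[a Aa] [[AL _] [her dirA]]] ext].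
exists a.1.
have sub1 : A `<=` J a.1.
  move=> l Al; split; first exact: AL.
  have [l' [_ [h1 h2]]] := dirA _ _ Aa Al.
  by rewrite -(lle_fst h2) (lle_fst h1).
have Ae : A (a.1, e).
  apply: (her _ a Aa); case: a Aa {sub1} => y m Aa.
  have [Pm dm] := AL _ Aa.
  by apply: (lle_up (dom_e y) dm Pm); rewrite mul1q.
apply/seteqP; split => //.
move=> [y m] [[Pm dm] /= ey]; subst y.
have [K [cK [nK KU]]] := cpt_nbhs_in hX hLC (Uopen Pm) dm.
pose E := [set l : LT X Q | K l.1 /\ l.2 = m].
have cE : compact E.
  have -> : E = [set ((y, m) : LT X Q) | y in K].
    apply/seteqP; split => [[y n] [Ky /= ->]|_ [y Ky <-]] //; by exists y.
  apply: continuous_compact => //; apply: continuous_subspaceT; exact: pair_cont.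
have exE : exhaustive mul P dom act E.
  split; first by move=> [z n] [Kz /= ->]; split => //; exact: KU.
  move=> [z n] [Pn dn] [[z' n'] [Kz' _] /= ez]; subst z'.
  have dzm : dom z m by exact: KU.
  have [r [dr [l1 l2]]] := common_up dn dzm.
  by exists (z, m); split => //; exists (z, r).
have nE : nbhs (lsrc act ((a.1, e) : LT X Q)) (@lrg X Q @` E).
  rewrite /lsrc /= act_e; apply: filterS nK => y Ky; by exists (y, m).
have [[z m'] [[Kz /= em] [ez Am]]] := ext _ Ae E cE exE nE.
subst m'; move: ez Am; rewrite /lsrc /lrg /lcomp /= act_e => _.
by rewrite mul1q.
Qed.


Lemma pshift_J x m : dom x m -> pshift mul P dom act (J x) m = J (act x m).
Proof.
move=> dm; apply/seteqP; split.
  move=> nu [Lnu [[x' m'] [Lmu [/= em [/= snu [_ /= ex]]]]]]; subst x' m'.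
  by split.
move=> [y n] [[Pn dn] /= ey]; rewrite /pshift /=; split; first by split.
exists (x, m); split; first by split => //; exact: domP dm.
split => //; split => //.
split => //=; split => /=; first by apply: Pmul => //; exact: domP dm.
apply: (proj2 (dom_mul x (domP dm) Pn)); split => //; by rewrite -ey.
Qed.

Lemma bdom_J x m : bdom mul P dom act (J x) m <-> dom x m.
Proof.
split.
  by case=> _ [Pm [nu [_ [[x' m'] [[Pmu dmu] [/= em [_ [_ /= ex]]]]]]]]; subst.
move=> dm; split; first exact: J_bdry.
split; first exact: domP dm.
rewrite pshift_J //; exists (act x m, e); exact: J_e.
Qed.


Lemma sub_nbhs S x : fell_sub P dom S -> S (J x) -> nbhs x [set y | S (J y)].
Proof.
case=> [[K [KL [cK ->]]] | [Oo [oO ->]]] /= H.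
  pose F := (fun l : LT X Q => l.1) @` K.
  have cF : compact F.
    by apply: continuous_compact => //; apply: continuous_subspaceT; exact: fst_cont.
  have clF : closed F by exact: compact_closed hX cF.
  have nF : nbhs x (~` F).
    apply: open_nbhs_nbhs; split; first exact: closed_openC.
    move=> [l Kl lx].
    have : (J x `&` K) l by split => //; split => //; exact: KL.
    by rewrite H.
  apply: filterS nF => y nFy.
  apply/seteqP; split => // l [[_ ly] Kl]; apply: nFy; by exists l.
case: H => [[y m] [[[Pm dm] /= yx] [Om _]]]; subst y.
have oN : open ((fun y => ((y, m) : LT X Q)) @^-1` Oo `&` Udom dom m).
  apply: openI; last exact: Uopen.
  by apply: open_comp => // z _; exact: pair_cont.
have : nbhs x ((fun y => ((y, m) : LT X Q)) @^-1` Oo `&` Udom dom m).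
  by apply: open_nbhs_nbhs; split.
apply: filterS => z [Oz dz].
by exists (z, m); split; [split | split] => //; split.
Qed.

Lemma J_open W : open W <-> bdry_open mul P dom act (J @` W).
Proof.
split.
  move=> oW; split; first by move=> _ [x _ <-]; exact: J_bdry.
  pose WQ := (fun l : LT X Q => l.1) @^-1` W.
  have oWQ : open WQ by apply: open_comp => // l _; exact: fst_cont.
  exists [set A | A `&` (WQ `&` Lam P dom) !=set0]; split.
    move=> A HA; exists 1%N, (fun _ => [set A | A `&` (WQ `&` Lam P dom) !=set0]).
    split; first by move=> i _; right; exists WQ.
    by split => [i _ | B /(_ 0%N isT)].
  apply/seteqP; split.
    move=> _ [x Wx <-]; split; last exact: J_bdry.
    exists (x, e); split; first exact: J_e.
    by split => //; exact: (J_e x).1.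
  move=> A [[l [Al [WQl Ll]]] BA]; have [x Jx] := J_surj BA; subst A.
  by exists x => //; case: Al => _ <-.
case=> _ [Oo [fO EO]].
rewrite openE => x Wx.
have OJx : Oo (J x).
  have : (J @` W) (J x) by exists x.
  by rewrite EO; case.
have [n [f [fs [fJ fO']]]] := fO _ OJx.
have key : forall k, (k <= n)%N -> nbhs x [set y | forall i, (i < k)%N -> f i (J y)].
  elim=> [|k IH] kn.
    by apply: filterS filterT => y _ i.
  have N1 := IH (ltnW kn).
  have N2 := sub_nbhs (fs k kn) (fJ k kn).
  apply: filterS (filterI N1 N2) => y [H1 H2] i.
  by rewrite ltnS leq_eqVlt => /orP [/eqP -> // | /H1].
have := key n (leqnn n); apply: filterS => y Hy.
have : (J @` W) (J y) by rewrite EO; split; [exact: fO' | exact: J_bdry].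
by case=> w Ww /J_inj <-.
Qed.


Lemma Zb_J U V m n x q y :
  Zbasic mul inv (bdom mul P dom act) (pshift mul P dom act) (J @` U) m n (J @` V)
    (J x, q, J y) <-> Zbasic mul inv dom act U m n V (x, q, y).
Proof.
split.
  case=> [[x' Ux' /J_inj ex] [[y' Vy' /J_inj ey] [eq [/bdom_J dm [/bdom_J dn E]]]]].
  subst x' y'; do 5 (split => //).
  by move: E; rewrite !pshift_J // => /J_inj.
case=> [Ux [Vy [eq [dm [dn E]]]]].
split; first by exists x.
split; first by exists y.
split => //; split; first exact/bdom_J.
split; first exact/bdom_J.
by rewrite !pshift_J // E.
Qed.

Lemma main :
  exists J : X -> set (LT X Q),
    (forall x, Bdry mul P dom act (J x)) /\
    injective J /\
    (forall A, Bdry mul P dom act A -> exists x, J x = A) /\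
    (forall W : set X, open W <-> bdry_open mul P dom act (J @` W)) /\
    (forall x m, dom x m ->
       pshift mul P dom act (J x) m !=set0 /\
       J (act x m) = pshift mul P dom act (J x) m) /\
    let GX := Gset mul inv P [set: X] dom act in
    let GB := Gset mul inv P (Bdry mul P dom act) (bdom mul P dom act)
                (pshift mul P dom act) in
    let Phi := fun g : X * Q * X => let '(x, q, y) := g in (J x, q, J y) in
    (forall g, GX g -> GB (Phi g)) /\
    {in GX &, injective Phi} /\
    (forall h, GB h -> exists g, GX g /\ Phi g = h) /\
    (forall g h, GX g -> GX h -> g.2 = h.1.1 ->
       Phi (gmul mul g h) = gmul mul (Phi g) (Phi h)) /\
    (forall g, GX g -> Phi (ginv inv g) = ginv inv (Phi g)) /\
    (forall W, W `<=` GX ->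
       (Gopen mul inv P [set: X] dom act open W <->
        Gopen mul inv P (Bdry mul P dom act) (bdom mul P dom act)
          (pshift mul P dom act) (bdry_open mul P dom act) (Phi @` W))).
Proof.
exists J.
split; first exact: J_bdry.
split; first exact: J_inj.
split; first exact: J_surj.
split; first exact: J_open.
split.
  move=> x m dm; rewrite pshift_J //; split => //.
  by exists (act x m, e); exact: J_e.
move=> GX GB Phi.
have hA : forall g, GX g -> GB (Phi g).
  move=> [[x q] y] [_ [_ [m [n [Pm [Pn [eq [dm [dn E]]]]]]]]].
  split; first exact: J_bdry.
  split; first exact: J_bdry.
  exists m, n; do 3 (split => //).
  split; first exact/bdom_J.
  split; first exact/bdom_J.
  by rewrite !pshift_J // E.
have hinj : injective Phi.
  by move=> [[x q] y] [[x' q'] y'] /= [/J_inj -> -> /J_inj ->].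
split => //.
split; first by move=> g h _ _; exact: hinj.
split.
  move=> [[A q] B] [BA [BB [m [n [Pm [Pn [eq [dA [dB E]]]]]]]]].
  have [x ex] := J_surj BA; have [y ey] := J_surj BB; subst A B.
  move/bdom_J: dA => dA; move/bdom_J: dB => dB.
  exists (x, q, y); split => //.
  split => //; split => //; exists m, n; do 5 (split => //).
  by move: E; rewrite !pshift_J // => /J_inj.
split; first by move=> [[x q] y] [[x' q'] y'].
split; first by move=> [[x q] y].
move=> W WG; split.
  case=> [WGs Hw]; split.
    by move=> _ [g Wg <-]; exact: hA (WG g Wg).
  move=> _ [[[x q] y] Wg <-].
  have [U [V [m [n [oU [oV [Pm [Pn [Zg ZW]]]]]]]]] := Hw _ Wg.
  exists (J @` U), (J @` V), m, n.
  split; first exact/J_open.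
  split; first exact/J_open.
  split => //; split => //.
  split; first exact/Zb_J.
  move=> [[A q'] B] HZ; case: (HZ) => [[x' _ eA] [[y' _ eB] _]]; subst A B.
  move/Zb_J: HZ => Z'.
  by exists (x', q', y') => //; exact: ZW.
case=> [_ Hb]; split; first exact: WG.
move=> [[x q] y] Wg.
have [U' [V' [m [n [oU' [oV' [Pm [Pn [Z ZW]]]]]]]]] := Hb (J x, q, J y) (ex_intro2 _ _ (x, q, y) Wg erefl).
have eU : J @` (J @^-1` U') = U'.
  apply/seteqP; split; first by move=> _ [z Uz <-].
  by move=> A UA; have [z ez] := J_surj (oU'.1 A UA); exists z => //=; rewrite ez.
have eV : J @` (J @^-1` V') = V'.
  apply/seteqP; split; first by move=> _ [z Uz <-].
  by move=> A UA; have [z ez] := J_surj (oV'.1 A UA); exists z => //=; rewrite ez.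
exists (J @^-1` U'), (J @^-1` V'), m, n.
split; first by apply/J_open; rewrite eU.
split; first by apply/J_open; rewrite eV.
split => //; split => //.
split; first by apply/Zb_J; rewrite eU eV.
move=> [[x' q'] y'] Z'.
have : Zbasic mul inv (bdom mul P dom act) (pshift mul P dom act) U' m n V' (J x', q', J y').
  by rewrite -eU -eV; apply/Zb_J.
move/ZW => [[[a b] c] Wg' Eg'].
by move: Eg' Wg' => /= [/J_inj -> -> /J_inj ->].
Qed.

End Main.

Unset Implicit Arguments. Set Strict Implicit.

Theorem proposition6p20
  (Q : choiceType) (mul : Q -> Q -> Q) (inv : Q -> Q) (e : Q)
  (hQ : is_group mul inv e)
  (P : set Q) (hP : is_submonoid mul e P)
  (hqlo : quasi_lattice_ordered mul inv e P)
  (X : topologicalType) (dom : X -> Q -> Prop) (act : X -> Q -> X)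
  (hact : is_partial_action mul e P dom act)
  (hdir : directed_action mul P dom)
  (hlc : locally_compact_action P dom act) :
  exists J : X -> set (LT X Q),
    (* J is a homeomorphism of X onto the boundary path space *)
    (forall x, Bdry mul P dom act (J x)) /\
    injective J /\
    (forall A, Bdry mul P dom act A -> exists x, J x = A) /\
    (forall W : set X, open W <-> bdry_open mul P dom act (J @` W)) /\
    (* P-equivariance *)
    (forall x m, dom x m ->
       pshift mul P dom act (J x) m !=set0 /\
       J (act x m) = pshift mul P dom act (J x) m) /\
    (* (x,q,y) |-> (J x, q, J y) is an isomorphism of topological groupoids *)
    let GX := Gset mul inv P [set: X] dom act in
    let GB := Gset mul inv P (Bdry mul P dom act) (bdom mul P dom act)
                (pshift mul P dom act) in
    let Phi := fun g : X * Q * X => let '(x, q, y) := g in (J x, q, J y) in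
    (forall g, GX g -> GB (Phi g)) /\
    {in GX &, injective Phi} /\
    (forall h, GB h -> exists g, GX g /\ Phi g = h) /\
    (forall g h, GX g -> GX h -> g.2 = h.1.1 ->
       Phi (gmul mul g h) = gmul mul (Phi g) (Phi h)) /\
    (forall g, GX g -> Phi (ginv inv g) = ginv inv (Phi g)) /\
    (forall W, W `<=` GX ->
       (Gopen mul inv P [set: X] dom act open W <->
        Gopen mul inv P (Bdry mul P dom act) (bdom mul P dom act)
          (pshift mul P dom act) (bdry_open mul P dom act) (Phi @` W))).
Proof.
exact: (main hQ hP hact hdir hlc).
Qed.
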